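(* Suppose $G_{ii}>0$ for every $i\in\{1,\dots,p\}$. Then the problem $\min_{u\in\mathbb{R}^H}F(u)$, with $F(u):=p\log\big(\sum_{i=1}^pe^{(Bu)_i}G_{ii}\big)-\sum_{i=1}^p(Bu)_i$, has a solution.
   Context: $\mathcal G=(V,E)$ is a finite DAG; input neurons have no incoming edges, output neurons no outgoing edges, hidden neurons $\mathcal H$ ($H=|\mathcal H|$) are the rest. $\theta\in\mathbb{R}^p$ consists of one weight per edge and one bias $b_v$ per non-input neuron $v$. For $h\in\mathcal H$, $\mathrm{in}_h$ = indices of $b_h$ and of weights of edges entering $h$, $\mathrm{out}_h$ = indices of weights of edges leaving $h$. $B\in\mathbb{R}^{p\times H}$ has $B_{ih}=-1$ if $i\in\mathrm{in}_h$, $1$ if $i\in\mathrm{out}_h$, $0$ otherwise. $G=\partial\Phi(\theta)^\top\partial\Phi(\theta)$ where $\Phi:\mathbb{R}^p\to\mathbb{R}^q$ is the path-lifting: for each path $v_0\to\cdots\to v_d$ along edges ending at an output neuron (for $d=0$, $v_0$ non-input), the coordinate is the product of the weights along the path, times $b_{v_0}$ if $v_0$ is not an input neuron. *)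

(* Defs.v *)
From HB Require Import structures.
From mathcomp Require Import all_boot all_order all_algebra.
From mathcomp Require Import all_classical all_reals all_analysis.
Set Implicit Arguments. Unset Strict Implicit. Unset Printing Implicit Defensive.
Import Order.TTheory GRing.Theory Num.Theory.
Local Open Scope ring_scope.

Section Network.
Variables (V : finType) (E : rel V).

Definition acyclic := forall v : V, ~~ [exists w, E v w && connect E w v].

Definition is_input (v : V) := [forall u, ~~ E u v].
Definition is_output (v : V) := [forall w, ~~ E v w].
Definition is_hidden (v : V) := ~~ is_input v && ~~ is_output v.

Definition edge := {e : V * V | E e.1 e.2}.
Definition noninput := {v : V | ~~ is_input v}.
Definition hidden := {v : V | is_hidden v}.

(* parameter index set: one weight per edge, one bias per non-input neuron *)
Definition param := (edge + noninput)%type.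

Variable R : realType.

(* weight of the edge u -> v (0 if not an edge, never used then) *)
Definition wt (th : param -> R) (u v : V) : R :=
  match insub (u, v) : option edge with Some e => th (inl e) | None => 0 end.
Definition biasf (th : param -> R) (v : V) : R :=
  match insub v : option noninput with Some b => th (inr b) | None => 1 end.

(* x :: s is a path of the path-lifting: along edges, ending at an output
   neuron, and if it has length 0 its vertex is non-input *)
Definition valid_path (x : V) (s : seq V) :=
  [&& path E x s, is_output (last x s) & (s != [::]) || ~~ is_input x].

Definition Phi (th : param -> R) (x : V) (s : seq V) : R :=
  biasf th x * \prod_(y <- pairmap (wt th) x s) y.

Definition upd (th : param -> R) (i : param) (t : R) : param -> R :=
  fun j => if j == i then th i + t else th j.

Definition dPhi (th : param -> R) (i : param) (x : V) (s : seq V) : R :=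
  derive1 (fun t => Phi (upd th i t) x s) 0.

(* G = dPhi^T dPhi; paths are enumerated as tuples of d+1 vertices,
   d < #|V| (every path in a DAG has at most #|V| vertices) *)
Definition Gram (th : param -> R) (i j : param) : R :=
  \sum_(d < #|V|) \sum_(q : (d.+1).-tuple V | valid_path (thead q) (behead q))
     dPhi th i (thead q) (behead q) * dPhi th j (thead q) (behead q).

Definition in_h (h : hidden) (i : param) : bool :=
  match i with inl e => (val e).2 == val h | inr b => val b == val h end.
Definition out_h (h : hidden) (i : param) : bool :=
  match i with inl e => (val e).1 == val h | inr _ => false end.

Definition Bmat (i : param) (h : hidden) : R :=
  if in_h h i then -1 else if out_h h i then 1 else 0.

Definition Bu (u : hidden -> R) (i : param) : R := \sum_h Bmat i h * u h.

Definition Fobj (th : param -> R) (u : hidden -> R) : R :=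
  #|{: param}|%:R * ln (\sum_i expR (Bu u i) * Gram th i i) - \sum_i Bu u i.

End Network.

(* Main.v *)
Require Import Defs.
From HB Require Import structures.
From mathcomp Require Import all_boot all_order all_algebra.
From mathcomp Require Import all_classical all_reals all_analysis.
From mathcomp Require Import lra.
Import Order.TTheory GRing.Theory Num.Theory.
Import numFieldTopology.Exports numFieldNormedType.Exports.
Local Open Scope ring_scope.

Lemma core (R : realType) (I : finType) (a g : I -> R) (gpos : forall i, 0 < g i)
  (k i0 : I) :
  a k - a i0 - 2 * \sum_i `|ln (g i)| <=
  #|{: I}|%:R * ln (\sum_i expR (a i) * g i) - \sum_i a i.
Proof.
set S := \sum_i expR (a i) * g i.
set K := \sum_i `|ln (g i)|.
have termle : forall j, expR (a j) * g j <= S.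
  move=> j; rewrite /S (bigD1 j) //=. rewrite lerDl; apply: sumr_ge0 => i _.
  by rewrite mulr_ge0 // ?ltW ?gpos // expR_ge0.
have Spos : 0 < S by apply: lt_le_trans (termle k); rewrite mulr_gt0 ?expR_gt0.
have lnS j : a j + ln (g j) <= ln S.
  rewrite -[X in X + _]expRK -lnM ?posrE ?expR_gt0 ?gpos //.
  by rewrite ler_ln ?posrE ?mulr_gt0 ?expR_gt0 ?gpos.
have Kj j : `|ln (g j)| <= K.
  by rewrite /K (bigD1 j) //= lerDl sumr_ge0.
have Kj' : \sum_(i | i != i0) `|ln (g i)| <= K.
  by rewrite /K [X in _ <= X](bigD1 i0) //= lerDr.
have -> : #|{: I}|%:R * ln S - \sum_i a i = \sum_i (ln S - a i).
  by rewrite sumrB sumr_const mulr_natl.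
rewrite (bigD1 i0) //=.
have h1 : - K <= \sum_(i | i != i0) (ln S - a i).
  apply: le_trans (_ : - \sum_(i | i != i0) `|ln (g i)| <= _).
    by rewrite lerN2.
  rewrite -sumrN; apply: ler_sum => i _.
  have := lnS i; have : - `|ln (g i)| <= ln (g i) by rewrite lerNl ler_normr lexx orbT.
  lra.
have := lnS k; have := Kj k; have : - `|ln (g k)| <= ln (g k) by rewrite lerNl ler_normr lexx orbT.
lra.
Qed.
Lemma exists_output (V : finType) (E : rel V) (acyc : acyclic E) (h : V) :
  ~~ is_output E h -> exists o, is_output E o && ~~ is_input E o.
Proof.
move=> /forallPn [w0 /negbNE hw0].
pose P x := [exists y, connect E h y && E y x].
have Pw0 : P w0 by apply/existsP; exists h; rewrite connect0 hw0.
pose rch x := #|[set y | connect E x y]|.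
case: (arg_minnP rch Pw0) => o Po omin.
have [y /andP [hy yo]] := existsP Po.
exists o; apply/andP; split; last first.
  by apply/forallPn; exists y; rewrite negbK.
apply/forallP => x; apply/negP => Eox.
have Px : P x.
  by apply/existsP; exists o; rewrite Eox andbT (connect_trans hy) // connect1.
have := omin x Px; apply/negP; rewrite -ltnNge; apply: proper_card.
apply/properP; split.
  apply/fintype.subsetP => z; rewrite !inE => cxz; exact: connect_trans (connect1 Eox) cxz.
exists o; first by rewrite inE connect0.
rewrite inE; apply/negP => xo.
by have := acyc o; rewrite negb_exists => /forallP /(_ x); rewrite Eox xo.
Qed.

Section Main.
Variables (V : finType) (E : rel V) (R : realType) (th : param E -> R).
Hypothesis acyc : acyclic E.
Hypothesis Gpos : forall i : param E, 0 < Gram th i i.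

Let K := \sum_i `|ln (Gram th i i)|.

Lemma noninput_of_hidden (h : hidden E) : ~~ is_input E (val h).
Proof. by have /andP [] := valP h. Qed.

Lemma Bu_hid (u : hidden E -> R) (h : hidden E) :
  Bu u (inr (exist _ (val h) (noninput_of_hidden h))) = - u h.
Proof.
rewrite /Bu (bigD1 h) //= big1 => [|h' h'h].
  by rewrite /Bmat /= eqxx addr0 mulN1r.
rewrite /Bmat /=.
have -> : (val h == val h') = false.
  by apply/negbTE; apply: contra h'h => /eqP /val_inj ->.
by rewrite mul0r.
Qed.

Lemma Bu_out (u : hidden E -> R) (b : noninput E) :
  is_output E (val b) -> Bu u (inr b) = 0.
Proof.
move=> ob; rewrite /Bu big1 // => h' _; rewrite /Bmat /=.
have -> : (val b == val h') = false.
  apply/negbTE; apply/negP => /eqP eq.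
  by have /andP [_] := valP h'; rewrite -eq ob.
by rewrite mul0r.
Qed.

Lemma bound (u : hidden E -> R) (h : hidden E) :
  `|u h| - 2 * K <= Fobj th u.
Proof.
have /andP [_ nout] := valP h.
have [ov /andP [oo oni]] := @exists_output _ _ acyc _ nout.
pose bo : noninput E := exist _ ov oni.
pose bh : noninput E := exist _ (val h) (noninput_of_hidden h).
have eo : Bu u (inr bo) = 0 by apply: Bu_out.
have eh : Bu u (inr bh) = - u h by apply: Bu_hid.
rewrite /Fobj.
have [uh0|uh0] := leP 0 (u h).
  have := @core R _ (Bu u) (fun i => Gram th i i) Gpos (inr bo) (inr bh).
  by rewrite eo eh ger0_norm //= /K; lra.
have := @core R _ (Bu u) (fun i => Gram th i i) Gpos (inr bh) (inr bo).
by rewrite eo eh ltr0_norm //= /K; lra.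
Qed.

End Main.

Lemma cBu (V : finType) (E : rel V) (R : realType) n (f : hidden E -> 'I_n) i :
  continuous (fun v : 'rV[R]_n => Bu (fun h => v ord0 (f h)) i).
Proof.
rewrite /Bu; apply: (continuous_big add_continuous) => h _ v.
apply: continuousM; first exact: cst_continuous.
exact: coord_continuous.
Qed.

Theorem corollaryF6 (V : finType) (E : rel V) (R : realType)
  (th : param E -> R) :
  acyclic E ->
  (forall i : param E, 0 < Gram th i i) ->
  exists ustar : hidden E -> R, forall u : hidden E -> R,
    Fobj th ustar <= Fobj th u.
Proof.
move=> acyc Gpos.
have [k _|P0] := pickP (fun _ : param E => true); last first.
  exists (fun _ => 0) => u.
  have -> : u = (fun _ => 0); last exact: lexx.
  apply: funext => h.
  by have := P0 (inr (exist _ (val h) (@noninput_of_hidden _ _ h))).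
set K := \sum_i `|ln (Gram th i i)|.
set M := `|Fobj th (fun _ => 0) + 2 * K|.
pose n := #|{: hidden E}|.
pose toU (v : 'rV[R]_n) : hidden E -> R := fun h => v ord0 (enum_rank h).
pose A := [set v : 'rV[R]_n | forall i, `[-M, M]%classic (v ord0 i)]%classic.
have cA : compact A := rV_compact (fun i => @segment_compact R (-M) M).
have A0 : A (0 : 'rV[R]_n).
  by move=> i /=; rewrite mxE in_itv /= oppr_le0 normr_ge0.
have Spos (a : param E -> R) : 0 < \sum_i expR (a i) * Gram th i i.
  apply: (@lt_le_trans _ _ (expR (a k) * Gram th k k)).
    by rewrite mulr_gt0 ?expR_gt0.
  rewrite (bigD1 k) //= lerDl; apply: sumr_ge0 => i _.
  by rewrite mulr_ge0 // ?ltW ?Gpos // expR_ge0.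
have cont : continuous (fun v => Fobj th (toU v)).
  move=> v; rewrite /Fobj.
  have cS : continuous (fun w : 'rV[R]_n => \sum_i expR (Bu (toU w) i) * Gram th i i).
    apply: (continuous_big add_continuous) => i _ w.
    apply: (@continuousM R 'rV[R]_n); last exact: cst_continuous.
    apply: continuous_comp; last exact: continuous_expR.
    exact: cBu.
  have cL : continuous (fun w : 'rV[R]_n => \sum_i Bu (toU w) i).
    by apply: (continuous_big add_continuous) => i _ w; exact: cBu.
  have cl : {for v, continuous (fun w : 'rV[R]_n => ln (\sum_i expR (Bu (toU w) i) * Gram th i i))}.
    apply: continuous_comp; first exact: cS.
    exact: continuous_ln.
  apply: (@continuousB R R 'rV[R]_n (fun w => _) (fun w => _) v); last exact: cL.
  apply: (@continuousM R 'rV[R]_n (fun=> _) _ v); last exact: cl.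
  exact: cst_continuous.
have [c cA' cmin] := EVT_min_rV (ex_intro _ _ A0) cA (continuous_subspaceT cont).
exists (toU c) => u.
have F0 : Fobj th (toU c) <= Fobj th (fun _ => 0).
  have -> : (fun _ : hidden E => (0:R)) = toU 0.
    by apply: funext => h; rewrite /toU mxE.
  by apply: cmin; rewrite inE.
case: (boolP [forall h, `|u h| <= M]) => [/forallP hu | /forallPn [h hu]].
  have -> : u = toU (\row_i u (enum_val i)).
    by apply: funext => h; rewrite /toU mxE enum_rankK.
  apply: cmin; rewrite inE => i /=; rewrite mxE in_itv /= -ler_norml; exact: hu.
have := @bound _ _ _ _ acyc Gpos u h.
have : Fobj th (fun _ => 0) + 2 * K <= M by exact: ler_norm.
rewrite -/K; move: hu; rewrite -ltNge => hu.
lra.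
Qed.
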